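(* Let $F$ and $\hat F$ be distribution functions on $\mathbb R$ with finite second moments, and for $t\in\mathbb R$ let $\gamma(t)=1-F(t)$ and $\hat\gamma(t)=1-\hat F(t)$ be the p-values of the statistic value $t$ computed under $F$ and $\hat F$, respectively. Let $\phi(\xi)=\sup_{z\in\mathbb R}\big(F(z+\xi)-F(z)\big)$. Then for every $t\in\mathbb R$, $$|\hat\gamma(t)-\gamma(t)|\le d_2(\hat F,F)^{2/3}+\phi\big(d_2(\hat F,F)^{2/3}\big).$$
   Context: $d_2(\hat F,F)$ denotes the Wasserstein-2 distance between the distributions with CDFs $\hat F$ and $F$. *)

(* Defs.v *)
From HB Require Import structures.
From mathcomp Require Import all_boot all_order all_algebra.
From mathcomp Require Import all_classical all_reals all_analysis.
Set Implicit Arguments. Unset Strict Implicit. Unset Printing Implicit Defensive.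
Import Order.TTheory GRing.Theory Num.Theory.
Import numFieldNormedType.Exports.
Local Open Scope classical_set_scope.
Local Open Scope ring_scope.

(* A distribution on R is represented by a Borel probability measure mu;
   its distribution function is F(t) = mu(]-oo, t]). *)
Definition distfun (R : realType) (mu : probability R R) (t : R) : R :=
  fine (mu [set x | x <= t]).

Definition finite_second_moment (R : realType) (mu : probability R R) : Prop :=
  (\int[mu]_x ((x ^+ 2)%:E) < +oo)%E.

Definition coupling (R : realType) (mu nu : probability R R)
  (pi : probability (R * R)%type R) : Prop :=
  (forall A : set R, measurable A -> pi (fst @^-1` A) = mu A) /\
  (forall A : set R, measurable A -> pi (snd @^-1` A) = nu A).

Definition W2sq (R : realType) (mu nu : probability R R) : \bar R :=
  ereal_inf [set (\int[pi]_z (((z.1 - z.2) ^+ 2)%:E))%E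
            | pi in [set pi | coupling mu nu pi]].

Definition d2 (R : realType) (mu nu : probability R R) : R :=
  Num.sqrt (fine (W2sq mu nu)).

Definition modulus (R : realType) (F : R -> R) (xi : R) : R :=
  sup [set F (z + xi) - F z | z in [set: R]].

(* Main.v *)
Require Import Defs.
From HB Require Import structures.
From mathcomp Require Import all_boot all_order all_algebra.
From mathcomp Require Import all_classical all_reals all_analysis.
From mathcomp Require Import measurable_realfun.
From mathcomp Require Import ring lra.
Import Order.TTheory GRing.Theory Num.Theory.
Local Open Scope classical_set_scope.
Local Open Scope ring_scope.

Section S.
Variable R : realType.
Local Open Scope ereal_scope.

Lemma marg1 (pi : probability (R * R)%type R) (P : probability R R)
  (hm : forall A, measurable A -> pi (fst @^-1` A) = P A)
  (f : R -> \bar R) : measurable_fun [set: R] f -> (forall x, 0 <= f x) ->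
  \int[pi]_z f z.1 = \int[P]_x f x.
Proof.
move=> mf f0.
have := ge0_integral_pushforward measurable_fst pi
  measurableT mf (fun y _ => f0 y).
rewrite preimage_setT => <-.
apply: eq_measure_integral => A mA _ /=.
by rewrite /pushforward hm.
Qed.

Lemma marg2 (pi : probability (R * R)%type R) (P : probability R R)
  (hm : forall A, measurable A -> pi (snd @^-1` A) = P A)
  (f : R -> \bar R) : measurable_fun [set: R] f -> (forall x, 0 <= f x) ->
  \int[pi]_z f z.2 = \int[P]_x f x.
Proof.
move=> mf f0.
have := ge0_integral_pushforward measurable_snd pi
  measurableT mf (fun y _ => f0 y).
rewrite preimage_setT => <-.
apply: eq_measure_integral => A mA _ /=.
by rewrite /pushforward hm.
Qed.

Lemma mcost : measurable_fun [set: (R * R)%type] (fun z : R * R => ((z.1 - z.2) ^+ 2)%:E).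
Proof.
apply/measurable_EFinP; apply: measurable_funX.
by apply: measurable_funB; [exact: measurable_fst | exact: measurable_snd].
Qed.

Lemma msq : measurable_fun [set: R] (fun x : R => (x ^+ 2)%:E).
Proof. by apply/measurable_EFinP; apply: measurable_funX. Qed.

Lemma cost_fin (P Q : probability R R) (pi : probability (R * R)%type R) :
  coupling P Q pi -> finite_second_moment P -> finite_second_moment Q ->
  \int[pi]_z ((z.1 - z.2) ^+ 2)%:E < +oo.
Proof.
move=> [h1 h2] hP hQ.
pose g := fun z : R * R => (z.1 ^+ 2)%:E + (z.2 ^+ 2)%:E.
have g0 : forall z, 0 <= g z by move=> z; rewrite /g -EFinD lee_fin; nra.
have m1 : measurable_fun [set: (R * R)%type] (fun z : R * R => (z.1 ^+ 2)%:E).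
  by apply/measurable_EFinP; apply: measurable_funX; exact: measurable_fst.
have m2 : measurable_fun [set: (R * R)%type] (fun z : R * R => (z.2 ^+ 2)%:E).
  by apply/measurable_EFinP; apply: measurable_funX; exact: measurable_snd.
have mg : measurable_fun [set: (R * R)%type] g by exact: emeasurable_funD.
have hg : \int[pi]_z g z < +oo.
  rewrite /g ge0_integralD//; last 2 first.
    by move=> z _; rewrite lee_fin sqr_ge0.
    by move=> z _; rewrite lee_fin sqr_ge0.
  rewrite (@marg1 pi P h1 _ msq); last by move=> x; rewrite lee_fin sqr_ge0.
  rewrite (@marg2 pi Q h2 _ msq); last by move=> x; rewrite lee_fin sqr_ge0.
  exact: lte_add_pinfty.
have H : \int[pi]_z ((z.1 - z.2) ^+ 2)%:E <= \int[pi]_z (g z + g z).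
  apply: ge0_le_integral => //.
  - by move=> z _; rewrite lee_fin sqr_ge0.
  - exact: mcost.
  - exact: emeasurable_funD.
  - move=> z _; rewrite /g -!EFinD lee_fin; have := sqr_ge0 (z.1 + z.2); nra.
apply: (le_lt_trans H).
rewrite ge0_integralD//.
exact: lte_add_pinfty.
Qed.

Lemma markov2 (pi : probability (R * R)%type R) (e : R) : (0 < e)%R ->
  pi ((fun z : R * R => ((z.1 - z.2) ^+ 2)%R) @^-1` `[(e ^+ 2)%R, +oo[) <=
  ((e ^+ 2)^-1)%:E * \int[pi]_z ((z.1 - z.2) ^+ 2)%:E.
Proof.
move=> e0.
set f := (fun z : R * R => ((z.1 - z.2) ^+ 2)%R).
have mf : measurable_fun [set: (R * R)%type] f.
  by apply: measurable_funX; apply: measurable_funB; [exact: measurable_fst | exact: measurable_snd].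
set A := f @^-1` _.
have mA : measurable A.
  by rewrite -[A]setTI; apply: mf => //; exact: measurable_itv.
have e20 : (0 < e ^+ 2)%R by rewrite exprn_gt0.
rewrite -(@lee_pmul2l _ (e ^+ 2)%:E) ?lte_fin//.
rewrite muleA -EFinM divff ?gt_eqF// mul1e.
rewrite -[A in pi A]setIT -integral_indic//.
rewrite -ge0_integralZl//; last 2 first.
  apply/measurable_EFinP; exact: (@measurable_indic _ _ R setT A mA).
  by rewrite lee_fin ltW.
apply: ge0_le_integral => //.
- by move=> z _; rewrite -EFinM lee_fin mulr_ge0// ltW.
- apply: measurable_funeM; apply/measurable_EFinP.
  exact: (@measurable_indic _ _ R setT A mA).
- exact: mcost.
- move=> z _; rewrite -EFinM lee_fin indicE.
  case: (boolP (z \in A)) => zA /=.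
    by rewrite mulr1; move: zA; rewrite inE /A /= in_itv /= andbT.
  by rewrite mulr0 sqr_ge0.
Qed.

Lemma mle (a : R) : measurable [set x : R | (x <= a)%R].
Proof.
have -> : [set x : R | (x <= a)%R] = `]-oo, a]%classic.
  by apply/seteqP; split => x /=; rewrite in_itv.
exact: measurable_itv.
Qed.

Lemma mfst (S : set R) : measurable S -> measurable (@fst R R @^-1` S).
Proof. by move=> mS; rewrite -setXT; apply: measurableX. Qed.

Lemma msnd (S : set R) : measurable S -> measurable (@snd R R @^-1` S).
Proof. by move=> mS; rewrite -setTX; apply: measurableX. Qed.

Lemma key (pi : probability (R * R)%type R) (a b e : R) : (0 < e)%R -> (a + e <= b)%R ->
  pi (fst @^-1` [set x | (x <= a)%R]) <= pi (snd @^-1` [set x | (x <= b)%R]) +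
    ((e ^+ 2)^-1)%:E * \int[pi]_z ((z.1 - z.2) ^+ 2)%:E /\
  pi (snd @^-1` [set x | (x <= a)%R]) <= pi (fst @^-1` [set x | (x <= b)%R]) +
    ((e ^+ 2)^-1)%:E * \int[pi]_z ((z.1 - z.2) ^+ 2)%:E.
Proof.
move=> e0 hab.
set f := (fun z : R * R => ((z.1 - z.2) ^+ 2)%R).
have mf : measurable_fun [set: (R * R)%type] f.
  by apply: measurable_funX; apply: measurable_funB; [exact: measurable_fst | exact: measurable_snd].
set A := f @^-1` `[(e ^+ 2)%R, +oo[.
have mA : measurable A.
  by rewrite -[A]setTI; apply: mf => //; exact: measurable_itv.
have hA := markov2 pi e e0.
split.
- apply: le_trans (_ : pi (snd @^-1` [set x | (x <= b)%R] `|` A) <= _).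
    apply: le_measure; rewrite ?inE.
    + apply: mfst; exact: mle.
    + by apply: measurableU => //; apply: msnd; exact: mle.
    move=> z /= za; case: (leP z.2 b) => zb; [by left | right].
    rewrite /A /f /= in_itv /= andbT; nra.
  apply: le_trans (measureU2 _ _ _) _.
  + apply: msnd; exact: mle.
  + exact: mA.
  exact: leeD2l.
- apply: le_trans (_ : pi (fst @^-1` [set x | (x <= b)%R] `|` A) <= _).
    apply: le_measure; rewrite ?inE.
    + apply: msnd; exact: mle.
    + by apply: measurableU => //; apply: mfst; exact: mle.
    move=> z /= za; case: (leP z.1 b) => zb; [by left | right].
    rewrite /A /f /= in_itv /= andbT; nra.
  apply: le_trans (measureU2 _ _ _) _.
  + apply: mfst; exact: mle.
  + exact: mA.
  exact: leeD2l.
Qed.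

Lemma pfin (P : probability R R) (A : set R) : measurable A -> P A = (fine (P A))%:E.
Proof. by move=> mA; rewrite fineK // fin_num_measure. Qed.

Lemma dist01 (P : probability R R) t : (0 <= distfun P t <= 1)%R.
Proof.
rewrite /distfun; apply/andP; split; first by apply: fine_ge0; exact: measure_ge0.
by have := probability_le1 P (mle t); rewrite (pfin P _ (mle t)) lee_fin.
Qed.

Lemma real_key (pi : probability (R * R)%type R) (P Q : probability R R) :
  coupling P Q pi -> \int[pi]_z ((z.1 - z.2) ^+ 2)%:E < +oo ->
  forall e a b : R, (0 < e)%R -> (a + e <= b)%R ->
  (distfun P a <= distfun Q b + fine (\int[pi]_z ((z.1 - z.2) ^+ 2)%:E) / e ^+ 2)%R /\
  (distfun Q a <= distfun P b + fine (\int[pi]_z ((z.1 - z.2) ^+ 2)%:E) / e ^+ 2)%R.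
Proof.
move=> [h1 h2] hc e a b e0 hab.
have [k1 k2] := key pi a b e e0 hab.
have E1 x : pi (fst @^-1` [set y | (y <= x)%R]) = P [set y | (y <= x)%R] := h1 _ (mle x).
have E2 x : pi (snd @^-1` [set y | (y <= x)%R]) = Q [set y | (y <= x)%R] := h2 _ (mle x).
rewrite !E1 !E2 in k1 k2.
have c0 : 0 <= \int[pi]_z ((z.1 - z.2) ^+ 2)%:E.
  by apply: integral_ge0 => z _; rewrite lee_fin sqr_ge0.
have cE : \int[pi]_z ((z.1 - z.2) ^+ 2)%:E = (fine (\int[pi]_z ((z.1 - z.2) ^+ 2)%:E))%:E.
  by rewrite fineK // ge0_fin_numE.
rewrite cE in k1 k2.
rewrite (pfin P _ (mle a)) (pfin Q _ (mle b)) -EFinM -EFinD lee_fin mulrC in k1.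
rewrite (pfin Q _ (mle a)) (pfin P _ (mle b)) -EFinM -EFinD lee_fin mulrC in k2.
by split.
Qed.

Lemma prod_coupling (P Q : probability R R) : coupling P Q (P \x Q)%E.
Proof.
have P1 : P [set: R] = 1 by exact: probability_setT.
have Q1 : Q [set: R] = 1 by exact: probability_setT.
split => A mA /=.
  rewrite -setXT product_measure1E //. rewrite (_ : _ [set: _] = 1) ?mule1 //.
rewrite -setTX product_measure1E //. by rewrite (_ : _ [set: _] = 1) ?mul1e //.
Qed.

Lemma bound_all (P Q : probability R R) :
  finite_second_moment P -> finite_second_moment Q ->
  (0 <= fine (W2sq P Q))%R /\
  forall e a b : R, (0 < e)%R -> (a + e <= b)%R ->
  (distfun P a <= distfun Q b + fine (W2sq P Q) / e ^+ 2)%R /\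
  (distfun Q a <= distfun P b + fine (W2sq P Q) / e ^+ 2)%R.
Proof.
move=> hP hQ.
pose S := [set (\int[pi]_z (((z.1 - z.2) ^+ 2)%:E))%E
            | pi in [set pi | coupling P Q pi]].
have WE : W2sq P Q = ereal_inf S by [].
have Sge0 : forall y, S y -> 0 <= y.
  by move=> y0 [pi _ hy]; rewrite -hy; apply: integral_ge0 => z _; rewrite lee_fin sqr_ge0.
have Sfin : forall y, S y -> y < +oo.
  move=> y0 [pi hpi hy]; rewrite -hy; exact: cost_fin P Q pi hpi hP hQ.
have S0 : S (\int[(P \x Q)%E]_z ((z.1 - z.2) ^+ 2)%:E).
  by exists (P \x Q)%E => //; exact: prod_coupling.
have W0 : 0 <= W2sq P Q by rewrite WE; apply/ereal_infP.
have Wfin : W2sq P Q \is a fin_num.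
  rewrite ge0_fin_numE // WE; apply: le_lt_trans (ereal_inf_lbound S0) _; exact: Sfin.
split; first exact: fine_ge0.
move=> e a b e0 hab.
have e20 : (0 < e ^+ 2)%R by rewrite exprn_gt0.
suff H : forall eta : R, (0 < eta)%R -> exists pi, coupling P Q pi /\
   (fine (\int[pi]_z ((z.1 - z.2) ^+ 2)%:E) <= fine (W2sq P Q) + eta * e ^+ 2)%R /\
   \int[pi]_z ((z.1 - z.2) ^+ 2)%:E < +oo.
  split; apply/ler_addgt0Pr => eta eta0; have [pi [hpi [hle hfin]]] := H eta eta0;
    have [k1 k2] := real_key pi P Q hpi hfin e a b e0 hab.
  - apply: (le_trans k1); rewrite -addrA lerD2l.
    have -> : (fine (W2sq P Q) / e ^+ 2 + eta = (fine (W2sq P Q) + eta * e ^+ 2) / e ^+ 2)%R.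
      by field; rewrite gt_eqF.
    by rewrite ler_pM2r // invr_gt0.
  - apply: (le_trans k2); rewrite -addrA lerD2l.
    have -> : (fine (W2sq P Q) / e ^+ 2 + eta = (fine (W2sq P Q) + eta * e ^+ 2) / e ^+ 2)%R.
      by field; rewrite gt_eqF.
    by rewrite ler_pM2r // invr_gt0.
move=> eta eta0.
rewrite WE in Wfin *.
have [c [pi hpi <-] hc] := lb_ereal_inf_adherent (mulr_gt0 eta0 e20) Wfin.
exists pi; split => //.
have hfin := cost_fin P Q pi hpi hP hQ.
split => //.
rewrite -(fineK Wfin) -EFinD in hc.
have c0 : 0 <= \int[pi]_z ((z.1 - z.2) ^+ 2)%:E.
  by apply: integral_ge0 => z _; rewrite lee_fin sqr_ge0.
rewrite -[X in X < _](fineK) ?ge0_fin_numE // lte_fin in hc.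
exact: ltW.
Qed.

Lemma rc (P : probability R R) (t x : R) :
  (forall n : nat, (x <= distfun P (t + n.+1%:R^-1))%R) -> (x <= distfun P t)%R.
Proof.
move=> hx.
pose F n := [set y : R | (y <= t + n.+1%:R^-1)%R].
have E : [set y : R | (y <= t)%R] = \bigcap_n F n.
  rewrite (_ : [set y | (y <= t)%R] = `]-oo, t]%classic); last first.
    by apply/seteqP; split=> y; rewrite /= in_itv.
  rewrite (itvNycEbigcap false).
  by apply: eq_bigcapr => n _; apply/seteqP; split=> y; rewrite /= in_itv.
have cv : (P \o F) n @[n --> \oo] --> P [set y | (y <= t)%R].
  rewrite E; apply: nonincreasing_cvg_mu.
  - by rewrite (le_lt_trans (probability_le1 _ _)) ?ltry //; exact: mle.
  - by move=> n; exact: mle.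
  - by rewrite -E; exact: mle.
  - move=> m n mn; apply/subsetPset => y /=; move/le_trans; apply.
    by rewrite lerD2l lef_pV2 ?posrE // ler_nat.
have : x%:E <= P [set y | (y <= t)%R].
  rewrite -(cvg_lim _ cv) //; apply: lime_ge; first by apply/cvg_ex; eexists; exact: cv.
  by near=> n; rewrite /= /F (pfin P _ (mle _)) lee_fin; exact: hx.
by rewrite (pfin P _ (mle t)) lee_fin.
Unshelve. all: by end_near.
Qed.

End S.
Arguments bound_all {R}.
Arguments dist01 {R}.
Arguments rc {R}.

Theorem lemma3 (R : realType) (mu muhat : probability R R)
  (hmu : finite_second_moment mu) (hmuhat : finite_second_moment muhat)
  (t : R) :
  let F := distfun mu in
  let Fhat := distfun muhat in
  let gamma := 1 - F t in
  let gammahat := 1 - Fhat t in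
  let d := d2 muhat mu in
  `|gammahat - gamma| <= d `^ (2 / 3) + modulus F (d `^ (2 / 3)).
Proof.
cbv zeta.
have [w0 hb] := bound_all muhat mu hmuhat hmu.
set w := fine (W2sq muhat mu) in w0 hb *.
have dE : d2 muhat mu = Num.sqrt w by [].
rewrite dE.
have eq1 : (1 - distfun muhat t - (1 - distfun mu t) = distfun mu t - distfun muhat t).
  by lra.
rewrite eq1.
have hub : forall e : R, has_ubound [set distfun mu (z + e) - distfun mu z | z in [set: R]].
  move=> e; exists 1 => y [z _ <-].
  have := dist01 mu (z + e); have := dist01 mu z.
  by move=> /andP[? ?] /andP[? ?]; lra.
have hphi : forall e z : R, distfun mu (z + e) - distfun mu z <= modulus (distfun mu) e.
  by move=> e z; apply: ub_le_sup; [exact: hub | exists z].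
have := sqrtr_ge0 w; rewrite le_eqVlt => /orP [/eqP d0 | dpos].
- have wz : w = 0.
    apply/eqP; rewrite eq_le w0 andbT -sqrtr_eq0; exact/eqP/esym.
  rewrite wz in hb.
  have ipos : forall n : nat, 0 < n.+1%:R^-1 :> R by move=> n; rewrite invr_gt0.
  have A1 : distfun muhat t <= distfun mu t.
    apply: rc => n.
    have := (hb (n.+1%:R^-1) t (t + n.+1%:R^-1) (ipos n) (lexx _)).1.
    by rewrite mul0r addr0.
  have A2 : distfun mu t <= distfun muhat t.
    apply: rc => n.
    have := (hb (n.+1%:R^-1) t (t + n.+1%:R^-1) (ipos n) (lexx _)).2.
    by rewrite mul0r addr0.
  have -> : distfun mu t - distfun muhat t = 0 by lra.
  rewrite normr0 -d0 powR0; last by apply/eqP; lra.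
  have := hphi 0 0; rewrite !addr0 subrr add0r; exact.
- set e := Num.sqrt w `^ (2 / 3).
  have e0 : 0 < e by apply: powR_gt0.
  have e3 : e ^+ 3 = w.
    rewrite -powR_mulrn; last exact: powR_ge0.
    rewrite /e -powRrM (_ : 2 / 3 * 3%:R = 2%:R :> R); last by field.
    by rewrite powR_mulrn ?sqrtr_ge0 // sqr_sqrtr.
  have we : w / e ^+ 2 = e.
    by rewrite -e3; field; rewrite gt_eqF.
  have h1 := (hb e t (t + e) e0 (lexx _)).1.
  have te : t - e + e <= t by rewrite subrK.
  have h2 := (hb e (t - e) t e0 te).2.
  rewrite we in h1 h2.
  have m1 := hphi e t.
  have m2 := hphi e (t - e); rewrite subrK in m2.
  rewrite ler_norml; apply/andP; split; lra.
Qed.
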